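(* Let $\psi\in\mathfrak M^+_\infty$, $b>0$, and let $t\ge1$ be such that $\mu(\psi;t)\ge b$. Then $$\frac12\,\frac{b^2}{(b+1)^2}\,(\eta(t)-t)\le\frac{\psi(t)}{|\psi'(t)|}\le4\Big(1+\frac1b\Big)(\eta(t)-t),$$ where $\psi'(t)=\psi'(t+0)$ denotes the right derivative.
   Context: Let $\mathfrak M$ be the set of positive, continuous, convex-downward functions $\psi(t)$ of $t\ge1$ with $\lim_{t\to\infty}\psi(t)=0$. For $\psi\in\mathfrak M$ put $\eta(t)=\eta(\psi;t)=\psi^{-1}(\psi(t)/2)$, where $\psi^{-1}$ is the inverse function of $\psi$, and $\mu(t)=\mu(\psi;t)=t/(\eta(t)-t)$. Let $\mathfrak M^+_\infty$ be the set of $\psi\in\mathfrak M$ for which $\mu(\psi;t)$ increases monotonically to $\infty$ as $t\to\infty$. *)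

(* Defs.v *)
From Stdlib Require Import Reals Lra.
Open Scope R_scope.

(* psi in M: positive, continuous, convex ("convex downward") on [1,+oo),
   with limit 0 at +oo.  Only values on [1,+oo) matter. *)
Definition in_M (psi : R -> R) : Prop :=
  (forall t, 1 <= t -> 0 < psi t) /\
  (forall t, 1 <= t -> forall eps, 0 < eps -> exists delta, 0 < delta /\
      forall s, 1 <= s -> Rabs (s - t) < delta -> Rabs (psi s - psi t) < eps) /\
  (forall x y l, 1 <= x -> 1 <= y -> 0 <= l <= 1 ->
      psi (l * x + (1 - l) * y) <= l * psi x + (1 - l) * psi y) /\
  (forall eps, 0 < eps -> exists T, forall t, T <= t -> Rabs (psi t) < eps).

(* eta t = psi^{-1}(psi t / 2): the (unique, as psi is strictly decreasing)
   point eta t >= 1 with psi (eta t) = psi t / 2. *)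
Definition is_eta (psi eta : R -> R) : Prop :=
  forall t, 1 <= t -> 1 <= eta t /\ psi (eta t) = psi t / 2.

Definition mu (eta : R -> R) (t : R) : R := t / (eta t - t).

Definition in_M_plus_inf (psi eta : R -> R) : Prop :=
  in_M psi /\ is_eta psi eta /\
  (forall s t, 1 <= s -> s <= t -> mu eta s <= mu eta t) /\
  (forall M, exists T, forall t, T <= t -> M <= mu eta t).

Definition right_deriv (psi : R -> R) (t d : R) : Prop :=
  forall eps, 0 < eps -> exists delta, 0 < delta /\
    forall h, 0 < h < delta -> Rabs ((psi (t + h) - psi t) / h - d) < eps.

(* Main.v *)
Require Import Defs.
From Stdlib Require Import Reals.
From Stdlib Require Import Lra Psatz.
Open Scope R_scope.

Lemma nonincr psi : in_M psi -> forall x y, 1 <= x -> x <= y -> psi y <= psi x.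
Proof.
  intros [Hpos [_ [Hconv Hlim]]] x y Hx Hxy.
  destruct (Rle_lt_dec (psi y) (psi x)) as [H|H]; [exact H|exfalso].
  assert (Hy : 0 < psi y) by (apply Hpos; lra).
  destruct (Hlim _ Hy) as [T HT].
  set (z := Rmax T (y+1)).
  assert (Hz1 : T <= z) by apply Rmax_l.
  assert (Hz2 : y + 1 <= z) by apply Rmax_r.
  assert (Hxy' : x < y) by (destruct (Req_dec x y); [subst; lra| lra]).
  specialize (HT z Hz1).
  assert (Hpz : 0 < psi z) by (apply Hpos; lra).
  rewrite Rabs_right in HT by lra.
  set (l := (z - y) / (z - x)).
  assert (Hl : 0 <= l <= 1).
  { unfold l; split.
    - apply Rle_mult_inv_pos; lra.
    - apply (Rmult_le_reg_r (z - x)); [lra|]. field_simplify; lra. }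
  assert (Hl' : 0 < l) by (unfold l; apply Rdiv_lt_0_compat; lra).
  specialize (Hconv x z l Hx ltac:(lra) Hl).
  replace (l * x + (1 - l) * z) with y in Hconv by (unfold l; field; lra).
  nra.
Qed.

Lemma chord psi : in_M psi -> forall x y z, 1 <= x -> x < y -> y < z ->
  psi y * (z - x) <= (z - y) * psi x + (y - x) * psi z.
Proof.
  intros [_ [_ [Hconv _]]] x y z Hx Hxy Hyz.
  set (l := (z - y) / (z - x)).
  assert (Hl : 0 <= l <= 1).
  { unfold l; split.
    - apply Rle_mult_inv_pos; lra.
    - apply (Rmult_le_reg_r (z - x)); [lra|]. field_simplify; lra. }
  specialize (Hconv x z l Hx ltac:(lra) Hl).
  replace (l * x + (1 - l) * z) with y in Hconv by (unfold l; field; lra).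
  replace ((z - y) * psi x + (y - x) * psi z)
    with ((l * psi x + (1 - l) * psi z) * (z - x)) by (unfold l; field; lra).
  apply Rmult_le_compat_r; lra.
Qed.

Lemma eta_gt psi eta : in_M psi -> is_eta psi eta -> forall t, 1 <= t -> t < eta t.
Proof.
  intros HM He t Ht.
  destruct (He t Ht) as [He1 He2].
  destruct (Rle_lt_dec (eta t) t) as [H|H]; [exfalso|exact H].
  pose proof (nonincr psi HM (eta t) t He1 H).
  destruct HM as [Hpos _]. specialize (Hpos t Ht). lra.
Qed.

Lemma rd_lower psi t d L h0 : right_deriv psi t d -> 0 < h0 ->
  (forall h, 0 < h < h0 -> L <= (psi (t + h) - psi t) / h) -> L <= d.
Proof.
  intros Hd Hh0 HL.
  destruct (Rle_lt_dec L d) as [H|H]; [exact H|exfalso].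
  destruct (Hd (L - d) ltac:(lra)) as [del [Hdel Hq]].
  set (h := Rmin del h0 / 2).
  assert (0 < Rmin del h0) by (apply Rmin_pos; lra).
  assert (Rmin del h0 <= del) by apply Rmin_l.
  assert (Rmin del h0 <= h0) by apply Rmin_r.
  specialize (Hq h ltac:(unfold h; lra)). specialize (HL h ltac:(unfold h; lra)).
  apply Rabs_def2 in Hq. lra.
Qed.

Lemma rd_upper psi t d U h0 : right_deriv psi t d -> 0 < h0 ->
  (forall h, 0 < h < h0 -> (psi (t + h) - psi t) / h <= U) -> d <= U.
Proof.
  intros Hd Hh0 HL.
  destruct (Rle_lt_dec d U) as [H|H]; [exact H|exfalso].
  destruct (Hd (d - U) ltac:(lra)) as [del [Hdel Hq]].
  set (h := Rmin del h0 / 2).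
  assert (0 < Rmin del h0) by (apply Rmin_pos; lra).
  assert (Rmin del h0 <= del) by apply Rmin_l.
  assert (Rmin del h0 <= h0) by apply Rmin_r.
  specialize (Hq h ltac:(unfold h; lra)). specialize (HL h ltac:(unfold h; lra)).
  apply Rabs_def2 in Hq. lra.
Qed.

Theorem lemma2 (psi eta : R -> R) (b t d : R) :
  in_M_plus_inf psi eta -> 0 < b -> 1 <= t -> b <= mu eta t ->
  right_deriv psi t d ->
  / 2 * (b ^ 2 / (b + 1) ^ 2) * (eta t - t) <= psi t / Rabs d /\
  psi t / Rabs d <= 4 * (1 + / b) * (eta t - t).
Proof.
  intros [HM [He [Hmono _]]] Hb Ht Hmu Hd.
  pose proof (eta_gt psi eta HM He t Ht) as HE.
  destruct (He t Ht) as [HE1 HE2].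
  set (E := eta t) in *. set (D := E - t).
  set (P := psi t).
  assert (HP : 0 < P) by (destruct HM as [Hp _]; apply Hp; lra).
  assert (HD : 0 < D) by (unfold D; lra).
  assert (Hdu : d <= - (P / (2 * D))).
  { apply (rd_upper psi t d _ D Hd HD). intros h Hh.
    pose proof (chord psi HM t (t + h) E Ht ltac:(lra) ltac:(unfold D in Hh; lra)) as C.
    rewrite HE2 in C. fold P in C.
    replace (E - t) with D in C by reflexivity.
    apply (Rmult_le_reg_r h); [lra|].
    replace ((psi (t + h) - psi t) / h * h) with (psi (t + h) - P) by (unfold P; field; lra).
    apply (Rmult_le_reg_r D); [lra|].
    replace (- (P / (2 * D)) * h * D) with (- (P * h / 2)) by (field; lra).
    replace (E - (t + h)) with (D - h) in C by (unfold D; ring).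
    replace (t + h - t) with h in C by ring.
    nra. }
  assert (Hmu' : b * D <= t).
  { unfold mu in Hmu. fold E in Hmu. fold D in Hmu.
    apply (Rmult_le_compat_r D) in Hmu; [|lra].
    replace (t / D * D) with t in Hmu by (field; lra). lra. }
  assert (Hdl : - ((1 + / b) * P / D) <= d).
  { apply (rd_lower psi t d _ 1 Hd ltac:(lra)). intros h Hh.
    set (s := t + h).
    pose proof (eta_gt psi eta HM He s ltac:(unfold s; lra)) as Hs.
    destruct (He s ltac:(unfold s; lra)) as [Hs1 Hs2].
    pose proof (Hmono t s Ht ltac:(unfold s; lra)) as Hm.
    unfold mu in Hm. fold E in Hm. fold D in Hm.
    set (e2 := eta s - s) in *.
    assert (He2 : 0 < e2) by (unfold e2; lra).
    assert (Hte : t * e2 <= s * D).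
    { apply (Rmult_le_compat_r (D * e2)) in Hm; [|nra].
      replace (t / D * (D * e2)) with (t * e2) in Hm by (field; lra).
      replace (s / e2 * (D * e2)) with (s * D) in Hm by (field; lra). lra. }
    set (k := h * (1 + / b)).
    assert (Hk : 0 < k) by (unfold k; assert (0 < / b) by (apply Rinv_0_lt_compat; lra); nra).
    assert (Hes : eta s <= E + k).
    { assert (b * t * e2 <= b * t * (D + h / b)).
      { assert (b * (t * e2) <= b * (s * D)) by (apply Rmult_le_compat_l; lra).
        assert (h * (b * D) <= h * t) by (apply Rmult_le_compat_l; lra).
        unfold s in *.
        replace (b * t * (D + h / b)) with (b * t * D + t * h) by (field; lra).
        replace (b * ((t + h) * D)) with (b * t * D + h * (b * D)) in H by ring.
        replace (b * (t * e2)) with (b * t * e2) in H by ring.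
        lra. }
      assert (e2 <= D + h / b).
      { apply (Rmult_le_reg_l (b * t)); [apply Rmult_lt_0_compat; lra|lra]. }
      assert (Hkk : k = h + h / b) by (unfold k; field; lra).
      rewrite Hkk. unfold e2, s, D in *. set (w := h / b) in *. clearbody E w. lra. }
    pose proof (nonincr psi HM (eta s) (E + k) Hs1 Hes) as Hn.
    pose proof (chord psi HM t E (E + k) Ht HE ltac:(lra)) as C.
    rewrite HE2 in C. fold P in C.
    replace (E + k - E) with k in C by ring.
    replace (E - t) with D in C by reflexivity.
    replace (E + k - t) with (D + k) in C by (unfold D; ring).
    assert (Hpk : P / 2 - k * P / (2 * D) <= psi (E + k)).
    { apply (Rmult_le_reg_r D); [lra|].
      replace ((P / 2 - k * P / (2 * D)) * D) with (P / 2 * D - k * P / 2) by (field; lra).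
      nra. }
    assert (Hps : P - k * P / D <= psi s).
    { assert (Hx : k * P / (2 * D) = (k * P / D) / 2) by (field; lra).
      rewrite Hx in Hpk. set (w := k * P / D) in *. clearbody w.
      fold s in Hs2. rewrite Hs2 in Hn. clearbody P s. lra. }
    apply (Rmult_le_reg_r h); [lra|].
    replace ((psi s - psi t) / h * h) with (psi s - P) by (unfold P; field; lra).
    replace (- ((1 + / b) * P / D) * h) with (- (k * P / D)) by (unfold k; field; lra).
    lra. }
  assert (Hneg : d < 0).
  { assert (0 < P / (2 * D)) by (apply Rdiv_lt_0_compat; lra). lra. }
  rewrite Rabs_left by lra.
  set (u := - d) in *.
  assert (Hu : 0 < u) by (unfold u; lra).
  set (q := P / u).
  assert (Hq : q * u = P) by (unfold q; field; lra).
  assert (Hu1 : u * D <= (1 + / b) * P).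
  { apply (Rmult_le_reg_r (/ D)); [apply Rinv_0_lt_compat; lra|].
    replace (u * D * / D) with u by (field; lra).
    unfold u. unfold Rdiv in Hdl. lra. }
  assert (Hu2 : P <= 2 * u * D).
  { apply (Rmult_le_reg_r (/ (2 * D))); [apply Rinv_0_lt_compat; lra|].
    replace (2 * u * D * / (2 * D)) with u by (field; lra).
    unfold u. unfold Rdiv in Hdu. lra. }
  assert (Hinv : / b * b = 1) by (field; lra).
  assert (Hib : 0 < / b) by (apply Rinv_0_lt_compat; lra).
  split.
  -
    assert (Hq1 : b * D <= q * (b + 1)).
    { apply (Rmult_le_reg_r u); [lra|].
      assert (b * (u * D) <= b * ((1 + / b) * P)) by (apply Rmult_le_compat_l; lra).
      replace (b * ((1 + / b) * P)) with ((b + 1) * P) in H by (field; lra).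
      rewrite <- Hq in H. nra. }
    replace (/ 2 * (b ^ 2 / (b + 1) ^ 2) * D) with ((b * D / (b + 1)) * (b / (2 * (b + 1)))) by (field; lra).
    assert (Hbd : b * D / (b + 1) <= q).
    { apply (Rmult_le_reg_r (b + 1)); [lra|].
      replace (b * D / (b + 1) * (b + 1)) with (b * D) by (field; lra). lra. }
    assert (0 <= b / (2 * (b + 1)) <= 1).
    { split. apply Rle_mult_inv_pos; lra.
      apply (Rmult_le_reg_r (2 * (b + 1))); [lra|].
      replace (b / (2 * (b + 1)) * (2 * (b + 1))) with b by (field; lra). lra. }
    assert (0 <= b * D / (b + 1)) by (apply Rle_mult_inv_pos; nra).
    nra.
  - assert (q <= 2 * D) by nra.
    nra.
Qed.
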